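(* Let $(A,+,\circ)$ be a finite left brace with cyclic additive group, let $g$ be an element of a transitive cycle base of $A$, and let $(A,\bullet)$ be the cycle set given by $a\bullet b:=\lambda_a(g)^{-}\circ b$. Let $H$ be the subgroup of $(A,\circ)$ such that $\mathrm{Ret}(A,\bullet)=A/H$ (namely $H=\{h\in A\mid\lambda_h(g)=g\}$). Then $H=\mathrm{Soc}(A)$.
   Context: A left brace is a set $A$ with two operations such that $(A,+)$ is an abelian group, $(A,\circ)$ is a group, and $a\circ(b+c)=a\circ b-a+a\circ c$. $\lambda_a(b):=-a+a\circ b$; $a\mapsto\lambda_a$ is a homomorphism $(A,\circ)\to\mathrm{Aut}(A,+)$. $a^{-}$ is the inverse of $a$ in $(A,\circ)$. $\mathrm{Soc}(A):=\{a\mid\lambda_a=\mathrm{id}_A\}$. A transitive cycle base is a single $\lambda$-orbit generating $(A,+)$. For a cycle set (left multiplications $\sigma_x$ bijective, $(x\cdot y)\cdot(x\cdot z)=(y\cdot x)\cdot(y\cdot z)$), $\mathrm{Ret}(X)$ is the quotient by $x\sim y\iff\sigma_x=\sigma_y$; for $(A,\bullet)$ its classes are the left cosets $a\circ H$. *)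

(* Defs.v *)
From HB Require Import structures.
From mathcomp Require Import all_boot all_order all_algebra.
Set Implicit Arguments. Unset Strict Implicit. Unset Printing Implicit Defensive.
Import GRing.Theory.
Local Open Scope ring_scope.

Definition is_left_brace (T : finZmodType) (circ : T -> T -> T) (e : T)
  (cinv : T -> T) : Prop :=
  [/\ (forall a b c, circ a (circ b c) = circ (circ a b) c),
      (forall a, circ e a = a /\ circ a e = a),
      (forall a, circ (cinv a) a = e /\ circ a (cinv a) = e)
    & (forall a b c, circ a (b + c) = circ a b - a + circ a c)].

Definition blambda (T : finZmodType) (circ : T -> T -> T) (a b : T) : T :=
  - a + circ a b.

Definition add_cyclic (T : finZmodType) : Prop :=
  exists g0 : T, forall x : T, exists n : nat, x = g0 *+ n.

Definition orbit_generates (T : finZmodType) (circ : T -> T -> T) (g : T) : Prop :=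
  forall x : T, exists c : T -> int,
    x = \sum_(a : T) (blambda circ a g) *~ c a.

(* g belongs to a transitive cycle base: the single lambda-orbit containing g
   generates (A,+) *)
Definition in_transitive_cycle_base (T : finZmodType) (circ : T -> T -> T)
  (g : T) : Prop := orbit_generates circ g.

Definition cycle_op (T : finZmodType) (circ : T -> T -> T) (cinv : T -> T)
  (g : T) (a b : T) : T := circ (cinv (blambda circ a g)) b.

Definition retH (T : finZmodType) (circ : T -> T -> T) (g : T) : {set T} :=
  [set h | blambda circ h g == g].

Definition bsoc (T : finZmodType) (circ : T -> T -> T) : {set T} :=
  [set a | [forall b, blambda circ a b == b]].

(* Main.v *)
Require Import Defs.
From mathcomp Require Import all_boot all_order all_algebra.
Import GRing.Theory.
Local Open Scope ring_scope.

Section Aux.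
Variable T : finZmodType.
Variable f : T -> T.
Hypothesis fD : forall x y, f (x + y) = f x + f y.

Lemma aux_f0 : f 0 = 0.
Proof. by apply: (addrI (f 0)); rewrite -fD !addr0. Qed.

Lemma aux_fN x : f (- x) = - f x.
Proof. by apply: (addrI (f x)); rewrite -fD !subrr aux_f0. Qed.

Lemma aux_fMn x n : f (x *+ n) = f x *+ n.
Proof. by elim: n => [|n IH]; rewrite ?mulr0n ?aux_f0 // !mulrS fD IH. Qed.

Lemma aux_fMz x z : f (x *~ z) = f x *~ z.
Proof. by case: z => n /=; rewrite ?aux_fN aux_fMn. Qed.

Lemma aux_fsum (F : T -> T) : f (\sum_(a : T) F a) = \sum_(a : T) f (F a).
Proof. exact: (big_morph f fD aux_f0). Qed.

Lemma aux_scal : add_cyclic T -> exists k : nat, forall x, f x = x *+ k.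
Proof.
case=> g0 Hg; have [k Hk] := Hg (f g0); exists k => x.
have [n ->] := Hg x; by rewrite aux_fMn Hk mulrnAC.
Qed.
End Aux.

Theorem mainTheorem3 (T : finZmodType) (circ : T -> T -> T) (e : T)
  (cinv : T -> T) (g : T) :
  is_left_brace circ e cinv ->
  add_cyclic T ->
  in_transitive_cycle_base circ g ->
  retH circ g = bsoc circ.
Proof.
case=> _ _ _ Hd Hc Hgen.
have lD : forall a x y, blambda circ a (x + y) = blambda circ a x + blambda circ a y.
  move=> a x y; rewrite /blambda Hd.
  by rewrite -!addrA.
apply/setP => h; rewrite !inE; apply/idP/idP; last first.
  by move/forallP => /(_ g).
move/eqP=> Hh; apply/forallP => x; apply/eqP.
have [k Hk] := @aux_scal T _ (lD h) Hc.
have [c ->] := Hgen x.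
rewrite (@aux_fsum T _ (lD h)); apply: eq_bigr => a _.
rewrite (@aux_fMz T _ (lD h)); congr (_ *~ _).
have [k' Hk'] := @aux_scal T _ (lD a) Hc.
by rewrite Hk Hk' mulrnAC -Hk Hh.
Qed.
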